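(* With $\phi_i,\theta^*,\pi_i,\pi_i^*,\mathcal{L},u,v,\lambda_\phi$ as in the generalized linear model setting: (i) $\mathcal{L}$ is $\beta$-smooth with $\beta=\frac38\max_i\|\phi_i\|_2^2$, i.e. $|z^\top\nabla^2\mathcal{L}(\theta)z|\le\beta\|z\|_2^2$ for all $\theta,z$; (ii) for every $\theta$ with $\mathcal{L}(\theta)>0$ and every $z\in\mathbb{R}^d$, $|z^\top\nabla^2\mathcal{L}(\theta)z|\le\beta(\theta)\|z\|_2^2$, where $$\beta(\theta)=L_1(\theta)\Big\|\frac{\partial\mathcal{L}(\theta)}{\partial\theta}\Big\|_2+L_0(\theta)\,\frac{\|\partial\mathcal{L}(\theta)/\partial\theta\|_2^2}{\mathcal{L}(\theta)},$$ $$L_1(\theta)=\frac{\max_i\|\phi_i\|_2^2}{32\,(\min\{u(\theta),v\}\sqrt{\lambda_\phi})^{3/2}},\qquad L_0(\theta)=\frac{17\max_i\|\phi_i\|_2^2}{512\,u(\theta)^2\min\{u(\theta)^2,v^2\}\lambda_\phi}.$$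
   Context: Generalized linear model setting: $\phi_1,\dots,\phi_N\in\mathbb{R}^d$ (not all zero), $\theta^*\in\mathbb{R}^d$, $\sigma(z)=1/(1+e^{-z})$, $\pi_i^*=\sigma(\phi_i^\top\theta^* )$, $\pi_i=\pi_i(\theta)=\sigma(\phi_i^\top\theta)$, $\mathcal{L}(\theta)=\frac1N\sum_{i=1}^N(\pi_i-\pi_i^* )^2$, $u(\theta)=\min_i\pi_i(1-\pi_i)$, $v=\min_i\pi_i^*(1-\pi_i^* )$, $\lambda_\phi$ the smallest positive eigenvalue of $\frac1N\sum_i\phi_i\phi_i^\top$. *)

(* Defs.v *)
From HB Require Import structures.
From mathcomp Require Import all_boot all_order all_algebra.
From mathcomp Require Import all_classical all_reals all_analysis.
Set Implicit Arguments. Unset Strict Implicit. Unset Printing Implicit Defensive.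
Import Order.TTheory GRing.Theory Num.Theory.
Import numFieldNormedType.Exports.
Local Open Scope ring_scope.

Section GLM.
Variable R : realType.

Definition dotv (d : nat) (x y : 'rV[R]_d) : R := \sum_(j < d) x 0 j * y 0 j.
Definition nrm2sq (d : nat) (x : 'rV[R]_d) : R := dotv x x.
Definition nrm2 (d : nat) (x : 'rV[R]_d) : R := Num.sqrt (nrm2sq x).

Definition sigmoid (z : R) : R := 1 / (1 + expR (- z)).

Definition pi_i (d N : nat) (phi : 'I_N -> 'rV[R]_d) (th : 'rV[R]_d) (i : 'I_N) : R :=
  sigmoid (dotv (phi i) th).

Definition Lglm (d N : nat) (phi : 'I_N -> 'rV[R]_d) (thstar th : 'rV[R]_d) : R :=
  N%:R^-1 * \sum_(i < N) (pi_i phi th i - pi_i phi thstar i) ^+ 2.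

(* min over i of pi_i (1 - pi_i); the seed 1 is harmless since each term is <= 1/4
   and N > 0 whenever some phi_i is nonzero *)
Definition umin (d N : nat) (phi : 'I_N -> 'rV[R]_d) (th : 'rV[R]_d) : R :=
  \big[Num.min/1]_(i < N) (pi_i phi th i * (1 - pi_i phi th i)).

(* max_i ||phi_i||_2^2 (all terms are >= 0, so seed 0 is the correct neutral) *)
Definition maxphi2 (d N : nat) (phi : 'I_N -> 'rV[R]_d) : R :=
  \big[Num.max/0]_(i < N) nrm2sq (phi i).

Definition gram (d N : nat) (phi : 'I_N -> 'rV[R]_d) : 'M[R]_d :=
  N%:R^-1 *: \sum_(i < N) ((phi i)^T *m phi i).

Definition smallest_pos_eig (d : nat) (M : 'M[R]_d) (lam : R) : Prop :=
  [/\ eigenvalue M lam, 0 < lam &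
      forall mu, eigenvalue M mu -> 0 < mu -> lam <= mu].

(* z^T (Hessian of f at th) z = second derivative of t |-> f(th + t z) at t = 0 *)
Definition hessq (d : nat) (f : 'rV[R]_d -> R) (th z : 'rV[R]_d) : R :=
  derive1 (derive1 (fun t : R => f (th + t *: z))) 0.

Definition grad (d : nat) (f : 'rV[R]_d -> R) (th : 'rV[R]_d) : 'rV[R]_d :=
  \row_(j < d) derive1 (fun t : R => f (th + t *: delta_mx 0 j)) 0.

End GLM.

(* Main.v *)
Require Import Defs.
From HB Require Import structures.
From mathcomp Require Import all_boot all_order all_algebra.
From mathcomp Require Import all_classical all_reals all_analysis.
From mathcomp Require Import complex sesquilinear spectral.
Import Order.TTheory GRing.Theory Num.Theory.
Import numFieldNormedType.Exports.
Local Open Scope ring_scope.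
From mathcomp Require Import ring lra zify.
Section S.
Variable R : realType.
Local Notation sig := (@sigmoid R).

Lemma sig_gt0 (x:R) : 0 < sig x.
Proof. rewrite /sigmoid div1r invr_gt0; apply: addr_gt0 => //; exact: expR_gt0. Qed.
Lemma sig_lt1 (x:R) : sig x < 1.
Proof.
rewrite /sigmoid ltr_pdivrMr ?mul1r; last by apply: addr_gt0 => //; exact: expR_gt0.
by rewrite ltrDl expR_gt0.
Qed.

Lemma is_derive_sig (x : R) : is_derive x 1 sig (sig x * (1 - sig x)).
Proof.
have h1 : is_derive x 1 (fun y : R => 1 + expR (- y)) (- expR (- x)).
  by apply: trigger_derive; rewrite add0r mul1r mulrN1.
have hne : 1 + expR (- x) != 0 by rewrite gt_eqF // addr_gt0 // expR_gt0.
have := @is_deriveV R (fun y => 1 + expR (- y)) x _ _ hne h1.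
rewrite /sigmoid; under [fun y => 1 / _]boolp.funext => y do rewrite div1r.
move=> h; apply: is_derive_eq h _.
rewrite !div1r; set e := expR (- x).
have -> : forall a b : R, a *: b = a * b by [].
by field.
Qed.


Definition sA (A B t : R) := sig (A + t * B).
Definition pp (s : R) := s * (1 - s).

Lemma is_derive_sA (A B t : R) : is_derive t 1 (sA A B) (pp (sA A B t) * B).
Proof.
have h : is_derive t 1 (fun t : R => A + t * B) B.
  by apply: trigger_derive; rewrite add0r mul1r scaler0 add0r; exact: mulr1.
have := @is_derive1_comp R sig (fun t : R => A + t * B) t _ _ (is_derive_sig (A + t * B)) h.
by rewrite /sA /pp.
Qed.

Lemma is_derive_q (A B c t : R) :
  is_derive t 1 (fun t => (sA A B t - c) ^+ 2)
    (2 * (sA A B t - c) * pp (sA A B t) * B).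
Proof.
have h := is_derive_sA A B t.
apply: trigger_derive.
have -> : forall a b : R, a *: b = a * b by [].
by rewrite /pp; ring.
Qed.

Lemma is_derive_q1 (A B c t : R) :
  is_derive t 1 (fun t => 2 * (sA A B t - c) * pp (sA A B t) * B)
    (2 * B ^+ 2 * pp (sA A B t) * (pp (sA A B t) + (sA A B t - c) * (1 - 2 * sA A B t))).
Proof.
have h := is_derive_sA A B t.
rewrite /pp; apply: trigger_derive.
have sc : forall a b : R, a *: b = a * b by [].
by rewrite !sc /pp; ring.
Qed.

Lemma is_derive_avg (N : nat) (h dh : 'I_N -> R -> R) (t : R) :
  (forall i (t : R), is_derive t 1 (h i) (dh i t)) ->
  is_derive t 1 (fun t => N%:R^-1 * \sum_(i < N) h i t) (N%:R^-1 * \sum_(i < N) dh i t).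
Proof.
move=> H.
have hs : is_derive t 1 (\sum_(i < N) h i) (\sum_(i < N) dh i t) by apply: is_derive_sum.
rewrite fct_sumE in hs.
have := is_deriveZ (N%:R^-1) hs.
by [].
Qed.

Lemma derive1_avg (N : nat) (h dh : 'I_N -> R -> R) :
  (forall i (t : R), is_derive t 1 (h i) (dh i t)) ->
  derive1 (fun t => N%:R^-1 * \sum_(i < N) h i t) = (fun t => N%:R^-1 * \sum_(i < N) dh i t).
Proof.
move=> H; apply/boolp.funext => t; rewrite derive1E.
by have [_ ->] := is_derive_avg _ _ _ t H.
Qed.

Lemma dotvDZ d (x y z : 'rV[R]_d) (t : R) : dotv x (y + t *: z) = dotv x y + t * dotv x z.
Proof.
rewrite /dotv mulr_sumr -big_split /=; apply: eq_bigr => j _.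
by rewrite !mxE mulrDr mulrCA.
Qed.

Variables (d N : nat) (phi : 'I_N -> 'rV[R]_d) (thstar : 'rV[R]_d).

Lemma L_line (th z : 'rV[R]_d) :
  (fun t => Lglm phi thstar (th + t *: z)) =
  (fun t => N%:R^-1 * \sum_(i < N) (fun t => (sA (dotv (phi i) th) (dotv (phi i) z) t - pi_i phi thstar i) ^+ 2) t).
Proof.
apply/boolp.funext => t; rewrite /Lglm; congr (_ * _); apply: eq_bigr => i _.
by rewrite /pi_i /sA dotvDZ mulrC.
Qed.

Lemma hessq_L (th z : 'rV[R]_d) :
  hessq (Lglm phi thstar) th z =
  N%:R^-1 * \sum_(i < N) (2 * dotv (phi i) z ^+ 2 * pp (pi_i phi th i) *
     (pp (pi_i phi th i) + (pi_i phi th i - pi_i phi thstar i) * (1 - 2 * pi_i phi th i))).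
Proof.
rewrite /hessq L_line.
rewrite (derive1_avg _ _ _ (fun i t => is_derive_q _ _ _ t)).
rewrite (derive1_avg _ _ _ (fun i t => is_derive_q1 _ _ _ t)).
congr (_ * _); apply: eq_bigr => i _.
by rewrite /sA mul0r addr0.
Qed.

Lemma grad_L (th : 'rV[R]_d) :
  grad (Lglm phi thstar) th =
  \row_(j < d) (N%:R^-1 * \sum_(i < N) (2 * (pi_i phi th i - pi_i phi thstar i) * pp (pi_i phi th i) * phi i 0 j)).
Proof.
apply/rowP => j; rewrite !mxE L_line.
rewrite (derive1_avg _ _ _ (fun i t => is_derive_q _ _ _ t)).
congr (_ * _); apply: eq_bigr => i _.
rewrite /sA mul0r addr0; congr (_ * _).
rewrite /dotv (bigD1 j) //= big1 ?addr0; first by rewrite mxE !eqxx /= mulr1.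
by move=> k kj; rewrite mxE (negbTE kj) andbF mulr0.
Qed.
End S.
Section T.
Variable R : realType.
Local Notation sig := (@sigmoid R).
Local Notation pp := (@pp R).
Local Notation is_derive_sig := (@is_derive_sig R).

Lemma sig_le (x y : R) : x <= y -> sig x <= sig y.
Proof.
move=> xy; rewrite /sigmoid !div1r lef_pV2 ?posrE ?addr_gt0 ?expR_gt0 //.
by rewrite lerD2l ler_expR lerN2.
Qed.

Lemma pp_between (a s b : R) : a <= s -> s <= b ->
  Num.min (pp a) (pp b) <= pp s.
Proof.
move=> ha hb; rewrite /pp; case: (lerP (s + a) 1) => h.
  rewrite ge_min; apply/orP; left; nra.
rewrite ge_min; apply/orP; right; nra.
Qed.

Lemma sig_mvt (x y : R) : exists k, [/\ Num.min (pp (sig x)) (pp (sig y)) <= k, k <= 1/4 &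
  sig x - sig y = k * (x - y)].
Proof.
wlog xy : x y / x <= y.
  move=> H; case: (lerP x y) => h; first exact: H.
  have [k [k1 k2 k3]] := H y x (ltW h); exists k; split => //.
    by rewrite minC.
  by apply: (@oppr_inj _); rewrite opprB k3 -mulrN opprB.
have cont : {within `[x, y], continuous sig}%classic.
  apply: continuous_subspaceT => z.
  have [hd _] := is_derive_sig z; exact/differentiable_continuous/derivable1_diffP.
have [c /andP[cx cy] e] := @MVT_segment R sig (fun z => pp (sig z)) x y xy (fun z _ => is_derive_sig z) cont.
exists (pp (sig c)); split.
- by apply: pp_between; apply: sig_le; rewrite ?(itvP cx) ?(itvP cy).
- have := sqr_ge0 (sig c - 1/2); rewrite /pp => h; nra.
- by apply: (@oppr_inj _); rewrite opprB e -mulrN opprB.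
Qed.
End T.

Section S2.
Variable R : realType.

Lemma nrm2sq_ge0 d (x : 'rV[R]_d) : 0 <= nrm2sq x.
Proof. by rewrite /nrm2sq /dotv sumr_ge0 // => j _; rewrite -expr2 sqr_ge0. Qed.

Lemma dotvC d (x y : 'rV[R]_d) : dotv x y = dotv y x.
Proof. by rewrite /dotv; apply: eq_bigr => j _; rewrite mulrC. Qed.

Lemma CS d (x y : 'rV[R]_d) : dotv x y ^+ 2 <= nrm2sq x * nrm2sq y.
Proof.
set a := nrm2sq x; set b := dotv x y; set c := nrm2sq y.
have key : 0 <= a * (a * c - b ^+ 2).
  have -> : a * (a * c - b ^+ 2) = \sum_(j < d) (a * y 0 j - b * x 0 j) ^+ 2.
    have e : \sum_(j < d) (a * y 0 j - b * x 0 j) ^+ 2 =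
      \sum_(j < d) (a ^+ 2 * (y 0 j * y 0 j) - 2 * a * b * (x 0 j * y 0 j) + b ^+ 2 * (x 0 j * x 0 j)).
      by apply: eq_bigr => j _; ring.
    rewrite e big_split /= sumrB -!mulr_sumr -/(dotv y y) -/(dotv x y) -/(dotv x x).
    rewrite -/(nrm2sq y) -/(nrm2sq x) -/c -/a -/b; ring.
  by apply: sumr_ge0 => j _; exact: sqr_ge0.
have a0 : 0 <= a by exact: nrm2sq_ge0.
have [aeq|apos] := eqVneq a 0.
  have xz : forall j, x 0 j = 0.
    move=> j; have := aeq; rewrite /a /nrm2sq /dotv => /eqP; rewrite psumr_eq0; last first.
      by move=> k _; rewrite -expr2 sqr_ge0.
    by move=> /allP /(_ j (mem_index_enum _)) /=; rewrite mulf_eq0 orbb => /eqP.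
  have -> : b = 0 by rewrite /b /dotv big1 // => j _; rewrite xz mul0r.
  by rewrite aeq expr0n /= mul0r.
have agt : 0 < a by rewrite lt_def apos a0.
by move: key; rewrite pmulr_rge0 // subr_ge0.
Qed.

Lemma hess_pt (s c : R) : 0 < s < 1 -> 0 < c < 1 ->
  `|2 * (s * (1 - s)) * (s * (1 - s) + (s - c) * (1 - 2 * s))| <= 3 / 8.
Proof.
move=> /andP[s0 s1] /andP[c0 c1].
set p := s * (1 - s).
have p0 : 0 <= p by rewrite /p mulr_ge0 // ?subr_ge0 ltW.
have p4 : p <= 1/4.
  have := sqr_ge0 (s - 1/2); rewrite /p => h; lra.
have q8 : (p * (1 - 2 * s)) ^+ 2 <= 1/64.
  have -> : (p * (1 - 2 * s)) ^+ 2 = p ^+ 2 * (1 - 4 * p) by rewrite /p; ring.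
  have := sqr_ge0 (p - 1/6); nra.
have q8' : `|p * (1 - 2 * s)| <= 1/8.
  rewrite -(@ler_pXn2r _ 2) ?nnegrE ?normr_ge0 ?divr_ge0 //.
  by rewrite real_normK ?num_real // [(1/8) ^+ 2]expr2; lra.
move: q8'; rewrite ler_norml => /andP[qa qb].
have rc : `|s - c| <= 1 by rewrite ler_norml; apply/andP; split; lra.
move: rc; rewrite ler_norml => /andP[ra rb].
have -> : 2 * p * (p + (s - c) * (1 - 2 * s)) = 2 * p ^+ 2 + 2 * ((s - c) * (p * (1 - 2 * s))) by ring.
set q := p * (1 - 2 * s) in qa qb *; set r := s - c in ra rb *.
have h1 : 0 <= (1 - r) * (1/8 - q) by apply: mulr_ge0; lra.
have h2 : 0 <= (1 + r) * (1/8 + q) by apply: mulr_ge0; lra.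
have h3 : 0 <= (1 - r) * (1/8 + q) by apply: mulr_ge0; lra.
have h4 : 0 <= (1 + r) * (1/8 - q) by apply: mulr_ge0; lra.
have h5 : p ^+ 2 <= 1/16 by rewrite expr2; nra.
rewrite ler_norml; apply/andP; split; nra.
Qed.
End S2.

Section Spec.
Local Open Scope sesquilinear_scope.
Variable R : realType.
Local Notation C := (complex R).
Local Notation toC := (real_complex R).

Lemma conj_toC (x : R) : (toC x)^* = toC x.
Proof. by apply: conj_Creal; rewrite complex_real. Qed.

Lemma toC_le (x y : R) : (toC x <= toC y) = (x <= y).
Proof. exact: lecR. Qed.

Lemma trC_map m n (M : 'M[R]_(m, n)) : (map_mx toC M) ^t Num.conj = map_mx toC M^T.
Proof. by apply/matrixP => i j; rewrite !mxE conj_toC. Qed.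


Lemma eig_toC d (G : 'M[R]_d) (a : R) : eigenvalue (map_mx toC G) (toC a) -> eigenvalue G a.
Proof.
rewrite /eigenvalue /eigenspace -!mxrank_eq0 !mxrank_ker.
have -> : map_mx toC G - (toC a)%:M = map_mx toC (G - a%:M).
  by rewrite map_mxB /= map_scalar_mx.
by rewrite mxrank_map.
Qed.

Lemma spec_ineq d (G : 'M[R]_d) lam : G^T = G -> smallest_pos_eig G lam ->
  forall y : 'rV[R]_d, lam * (y *m G *m y^T) 0 0 <= (y *m G *m G *m y^T) 0 0.
Proof.
move=> Gs [_ lam0 lammin] y.
set GC := map_mx toC G.
have GCt : GC ^t Num.conj = GC by rewrite trC_map Gs.
have nGC : GC \is normalmx by apply/normalmxP; rewrite GCt.
have hGC : GC \is hermsymmx by apply/is_hermitianmxP; rewrite expr0 scale1r GCt.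
set P := spectralmx GC; set D := spectral_diag GC.
have /orthomx_spectralP eqG := nGC.
have Pu : P \is unitarymx := spectral_unitarymx GC.
have iP : invmx P = P ^t Num.conj by rewrite invmx_unitary.
have PPt : P *m P ^t Num.conj = 1%:M by apply/unitarymxP.
have Dreal : D \is a mxOver Num.real := hermitian_spectral_diag_real hGC.
have eigk k : eigenvalue GC (D 0 k).
  apply/eigenvalueP; exists (row k P).
    rewrite -row_mul.
    have -> : P *m GC = diag_mx D *m P.
      by rewrite [in LHS]eqG !mulmxA mulmxV ?mul1mx // spectral_unit.
    by rewrite mul_diag_mx; apply/rowP => j; rewrite !mxE.
  apply/negP => /eqP h; have := congr1 (row k) PPt.
  rewrite row_mul h mul0mx => /rowP /(_ k); rewrite !mxE eqxx /=.
  by move=> /eqP; rewrite eq_sym oner_eq0.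
have Ek k : 0 <= D 0 k * D 0 k - toC lam * D 0 k.
  have rk : D 0 k \is Num.real by move/mxOverP: Dreal; apply.
  have l0 : 0 <= toC lam by rewrite ler0c ltW.
  move: rk; rewrite realE => /orP[dpos|dneg]; last first.
    by rewrite -mulrBl mulr_le0 // subr_le0 (le_trans dneg).
  have ek := eigk k; move: dpos ek.
  case: (D 0 k) => a b; rewrite lecE => /andP[/eqP b0 a0].
  have {}b0 : b = 0 := b0.
  subst b => ek.
  have {}a0 : 0 <= a := a0.
  have e : Complex a 0 = toC a by [].
  rewrite e in ek *.
  rewrite -!rmorphM -rmorphB ler0c.
  have [->|an0] := eqVneq a 0; first by rewrite !mul0r mulr0 subrr.
  have apos : 0 < a by rewrite lt_def an0 a0.
  have := lammin a (eig_toC _ _ _ ek) apos => la.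
  by rewrite -mulrBl mulr_ge0 // subr_ge0.
set yC := map_mx toC y.
set z := yC *m P ^t Num.conj.
have yCt : yC ^t Num.conj = yC^T by rewrite trC_map map_trmx.
have zt : z ^t Num.conj = P *m yC^T.
  by rewrite /z trmx_mul map_mxM trmxCK yCt.
have A1 : yC *m GC *m GC *m yC^T = z *m diag_mx D *m diag_mx D *m z ^t Num.conj.
  rewrite zt /z [in LHS]eqG iP !mulmxA.
  by rewrite -[_ *m P *m P ^t _]mulmxA PPt mulmx1.
have A2 : yC *m GC *m yC^T = z *m diag_mx D *m z ^t Num.conj.
  by rewrite zt /z [in LHS]eqG iP !mulmxA.
rewrite -toC_le.
have -> : toC ((y *m G *m G *m y^T) 0 0) = (yC *m GC *m GC *m yC^T) 0 0.
  by rewrite /yC /GC map_trmx -!map_mxM [in RHS]mxE.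
have -> : toC (lam * (y *m G *m y^T) 0 0) = toC lam * (yC *m GC *m yC^T) 0 0.
  by rewrite rmorphM /yC /GC map_trmx -!map_mxM [in RHS]mxE.
rewrite A1 A2 -subr_ge0; clearbody z.
rewrite !mul_mx_diag !mxE mulr_sumr -sumrB; apply: sumr_ge0 => k _; rewrite !mxE.
have -> : z 0 k * D 0 k * D 0 k * (z 0 k)^* - toC lam * (z 0 k * D 0 k * (z 0 k)^*) =
  (D 0 k * D 0 k - toC lam * D 0 k) * (z 0 k * (z 0 k)^*) by ring.
by apply: mulr_ge0; [exact: Ek | exact: mul_conjC_ge0].
Qed.

End Spec.

Section Rk.
Variable R : realType.

Lemma gram_rowspace N d (Phi : 'M[R]_(N, d)) : (Phi <= Phi^T *m Phi)%MS.
Proof.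
have sub : (Phi^T *m Phi <= Phi)%MS := submxMl _ _.
rewrite -(geq_leqif (mxrank_leqif_sup sub)).
set K := kermx (Phi^T *m Phi).
have KP : K *m Phi^T = 0.
  set B := K *m Phi^T.
  have BB : B *m B^T = 0.
    by rewrite /B trmx_mul trmxK mulmxA -(mulmxA K) mulmx_ker mul0mx.
  clearbody B; apply/matrixP => i j; rewrite [RHS]mxE.
  have := congr1 (fun M : 'M[R]_d => M i i) BB; rewrite !mxE /= => /eqP.
  rewrite psumr_eq0 => [/allP /(_ j (mem_index_enum _)) /= | k _]; last first.
    by rewrite mxE -expr2 sqr_ge0.
  by rewrite mxE -expr2 sqrf_eq0 => /eqP.
have : (K <= kermx Phi^T)%MS by apply/sub_kermxP.
move/mxrankS; rewrite !mxrank_ker mxrank_tr.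
have := rank_leq_col Phi; have := rank_leq_row (Phi^T *m Phi).
lia.
Qed.
End Rk.

Section Main.
Variable R : realType.
Variables (d N : nat) (phi : 'I_N -> 'rV[R]_d) (thstar : 'rV[R]_d).
Hypothesis hN : (0 < N)%N.
Local Notation pp := (pp R).
Local Notation sig := (@sigmoid R).

Lemma pi_bounds th i : 0 < pi_i phi th i < 1.
Proof. by rewrite /pi_i sig_gt0 sig_lt1. Qed.

Lemma pp_pi_gt0 th i : 0 < pp (pi_i phi th i).
Proof. by have /andP[a b] := pi_bounds th i; rewrite /pp mulr_gt0 // subr_gt0. Qed.

Lemma umin_le th i : umin phi th <= pp (pi_i phi th i).
Proof. exact: bigmin_le. Qed.

Lemma umin_gt0 th : 0 < umin phi th.
Proof.
rewrite /umin; elim/big_ind: _ => //.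
  by move=> x y x0 y0; rewrite lt_min x0 y0.
by move=> i _; exact: (pp_pi_gt0 th i).
Qed.

Lemma maxphi2_ge (i : 'I_N) : nrm2sq (phi i) <= maxphi2 phi.
Proof. exact: le_bigmax. Qed.

Lemma maxphi2_ge0 : 0 <= maxphi2 phi.
Proof. apply: le_trans (maxphi2_ge (Ordinal hN)); exact: nrm2sq_ge0. Qed.

Lemma partI th z : `|hessq (Lglm phi thstar) th z| <= 3 / 8 * maxphi2 phi * nrm2sq z.
Proof.
rewrite hessq_L normrM ger0_norm ?invr_ge0 ?ler0n //.
set M := 3 / 8 * maxphi2 phi * nrm2sq z.
have -> : M = N%:R^-1 * \sum_(i < N) M.
  by rewrite sumr_const card_ord -[M *+ N]mulr_natl mulrA mulVf ?mul1r // pnatr_eq0 -lt0n hN.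
apply: ler_wpM2l; first by rewrite invr_ge0 ler0n.
apply: le_trans (ler_norm_sum _ _ _) _; apply: ler_sum => i _.
set s := pi_i phi th i; set c := pi_i phi thstar i.
have -> : 2 * dotv (phi i) z ^+ 2 * pp s * (pp s + (s - c) * (1 - 2 * s)) =
  dotv (phi i) z ^+ 2 * (2 * (s * (1 - s)) * (s * (1 - s) + (s - c) * (1 - 2 * s))).
  by rewrite /pp; ring.
rewrite normrM ger0_norm ?sqr_ge0 //.
have hb := @hess_pt R _ _ (pi_bounds th i) (pi_bounds thstar i).
have cs := @CS R _ (phi i) z.
have hm := maxphi2_ge i.
have z0 := @nrm2sq_ge0 R _ z.
rewrite /M; apply: le_trans (ler_wpM2l (sqr_ge0 _) hb) _.
rewrite mulrC -mulrA ler_wpM2l //.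
apply: le_trans cs _; apply: ler_wpM2r => //.
Qed.

Lemma dotv_mx (a b : 'rV[R]_d) : dotv a b = (a *m b^T) 0 0.
Proof. by rewrite /dotv mxE; apply: eq_bigr => j _; rewrite mxE. Qed.

Lemma dotvB (x y z : 'rV[R]_d) : dotv x (y - z) = dotv x y - dotv x z.
Proof.
by rewrite /dotv -sumrB; apply: eq_bigr => j _; rewrite !mxE mulrBr.
Qed.

Definition Phi : 'M[R]_(N, d) := \matrix_(i, j) phi i 0 j.

Lemma gramE : gram phi = N%:R^-1 *: (Phi^T *m Phi).
Proof.
rewrite /gram; congr (_ *: _); apply/matrixP => j k.
rewrite summxE !mxE; apply: eq_bigr => i _; rewrite !mxE big_ord1 !mxE.
by rewrite !ord1.
Qed.

Lemma gram_sym : (gram phi)^T = gram phi.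
Proof. by rewrite gramE linearZ /= trmx_mul trmxK. Qed.

Lemma QF (a b : 'rV[R]_d) :
  (a *m gram phi *m b^T) 0 0 = N%:R^-1 * \sum_(i < N) dotv (phi i) a * dotv (phi i) b.
Proof.
rewrite gramE -scalemxAr -scalemxAl mxE; congr (_ * _).
rewrite mulmxA -(mulmxA (a *m Phi^T)) mxE; apply: eq_bigr => i _.
rewrite !mxE /dotv; congr (_ * _); apply: eq_bigr => j _; rewrite !mxE //.
by rewrite mulrC.
Qed.

Lemma key_ineq th lam : smallest_pos_eig (gram phi) lam -> 0 < Lglm phi thstar th ->
  64 * umin phi th ^+ 2 * Num.min (umin phi th ^+ 2) (umin phi thstar ^+ 2) * lam
    * Lglm phi thstar th <= nrm2sq (grad (Lglm phi thstar) th).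
Proof.
move=> hlam Lpos.
have lam0 : 0 < lam by case: hlam.
set L := Lglm phi thstar th.
set u := umin phi th; set v := umin phi thstar.
set mu := Num.min (u ^+ 2) (v ^+ 2).
have u0 : 0 < u := umin_gt0 th.
have v0 : 0 < v := umin_gt0 thstar.
have mu0 : 0 < mu by rewrite lt_min !exprn_gt0.
set w := th - thstar.
pose r i := pi_i phi th i - pi_i phi thstar i.
pose p i := pp (pi_i phi th i).
pose del i := dotv (phi i) w.
have hk i : exists k, [/\ Num.min (p i) (pp (pi_i phi thstar i)) <= k, k <= 1/4 & r i = k * del i].
  have [k [k1 k2 k3]] := @sig_mvt R (dotv (phi i) th) (dotv (phi i) thstar).
  by exists k; split => //; rewrite /r /del /w dotvB.
have LE : L = N%:R^-1 * \sum_(i < N) r i ^+ 2 by [].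
pose h : 'rV[R]_d := \row_j (N%:R^-1 * \sum_(i < N) r i * p i * phi i 0 j).
have gradE : grad (Lglm phi thstar) th = 2 *: h.
  rewrite grad_L; apply/rowP => j; rewrite !mxE [RHS]mulrCA [in RHS]mulr_sumr; congr (_ * _).
  by apply: eq_bigr => i _; rewrite /r /p; ring.
have nG : nrm2sq (grad (Lglm phi thstar) th) = 4 * nrm2sq h.
  rewrite gradE /nrm2sq /dotv mulr_sumr; apply: eq_bigr => j _; rewrite !mxE; ring.
have S1 : dotv h w = N%:R^-1 * \sum_(i < N) r i * p i * del i.
  rewrite /dotv (eq_bigr (fun j => N%:R^-1 * \sum_(i < N) r i * p i * (phi i 0 j * w 0 j))); last first.
    by move=> j _; rewrite mxE -mulrA mulr_suml; congr (_ * _); apply: eq_bigr => i _; rewrite mulrA.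
  rewrite -mulr_sumr exchange_big /=; congr (_ * _); apply: eq_bigr => i _.
  by rewrite /del /dotv mulr_sumr.
have pc0 i : 0 < pp (pi_i phi thstar i) := pp_pi_gt0 thstar i.
have p0 i : 0 < p i := pp_pi_gt0 th i.
have S2 : 4 * u * L <= dotv h w.
  rewrite S1 LE mulrCA ler_wpM2l ?invr_ge0 ?ler0n // mulr_sumr; apply: ler_sum => i _.
  have [k [k1 k2 k3]] := hk i.
  have k0 : 0 <= k by apply: le_trans k1; rewrite le_min !ltW.
  have pu : u <= p i := umin_le th i.
  have e1 : 0 <= del i ^+ 2 := sqr_ge0 _.
  have e2 : 0 <= k * (1 - 4 * k) by apply: mulr_ge0 => //; lra.
  have e3 : 0 <= k * (p i - u) by apply: mulr_ge0 => //; lra.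
  rewrite k3.
  have e4 : 0 <= del i ^+ 2 * (k * (p i - u) + u * (k * (1 - 4 * k))).
    by apply: mulr_ge0 => //; apply: addr_ge0 => //; apply: mulr_ge0 => //; exact: ltW.
  nra.
set G := gram phi.
set W := (w *m G *m w^T) 0 0.
have WE : W = N%:R^-1 * \sum_(i < N) del i ^+ 2.
  by rewrite /W QF; congr (_ * _); apply: eq_bigr => i _; rewrite expr2.
have W0 : 0 <= W by rewrite WE mulr_ge0 ?invr_ge0 ?ler0n ?sumr_ge0 // => i _; exact: sqr_ge0.
have S3 : mu * W <= L.
  rewrite WE LE mulrCA ler_wpM2l ?invr_ge0 ?ler0n // mulr_sumr; apply: ler_sum => i _.
  have [k [k1 k2 k3]] := hk i.
  have pu : u <= p i := umin_le th i.
  have pv : v <= pp (pi_i phi thstar i) := umin_le thstar i.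
  have m1 : mu <= u ^+ 2 by rewrite /mu ge_min lexx.
  have m2 : mu <= v ^+ 2 by rewrite /mu ge_min lexx orbT.
  have kmu : mu <= k ^+ 2.
    move: k1; rewrite ge_min => /orP[] hk1.
      apply: le_trans m1 _.
      by rewrite ler_pXn2r ?nnegrE ?(ltW u0) //; [lra | apply: le_trans (ltW (p0 i)) hk1].
    apply: le_trans m2 _.
    by rewrite ler_pXn2r ?nnegrE ?(ltW v0) //; [lra | apply: le_trans (ltW (pc0 i)) hk1].
  rewrite k3 exprMn; apply: ler_wpM2r => //; exact: sqr_ge0.
have hP : h = (N%:R^-1 *: \row_i (r i * p i)) *m Phi.
  apply/rowP => j; rewrite !mxE mulr_sumr; apply: eq_bigr => i _; rewrite !mxE; ring.
have hsub : (h <= Phi^T *m Phi)%MS.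
  by rewrite hP; exact: submx_trans (submxMl _ _) (gram_rowspace _ _ _ Phi).
have [D hD] := submxP hsub.
have Nn0 : N%:R != 0 :> R by rewrite pnatr_eq0 -lt0n.
set y := N%:R *: D.
have hy : h = y *m G.
  by rewrite /G gramE /y -scalemxAr -scalemxAl scalerA mulVf // scale1r.
set Q := (y *m G *m y^T) 0 0.
have QE : Q = N%:R^-1 * \sum_(i < N) dotv (phi i) y ^+ 2.
  by rewrite /Q QF; congr (_ * _); apply: eq_bigr => i _; rewrite expr2.
have Q0 : 0 <= Q by rewrite QE mulr_ge0 ?invr_ge0 ?ler0n ?sumr_ge0 // => i _; exact: sqr_ge0.
have S5 : dotv h w ^+ 2 <= Q * W.
  have cs := @CS R _ (\row_i dotv (phi i) y) (\row_i del i).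
  have e1 : dotv (\row_i dotv (phi i) y) (\row_i del i) = \sum_(i < N) dotv (phi i) y * dotv (phi i) w.
    by rewrite /dotv; apply: eq_bigr => i _; rewrite !mxE.
  have e2 : nrm2sq (\row_i dotv (phi i) y) = \sum_(i < N) dotv (phi i) y ^+ 2.
    by rewrite /nrm2sq /dotv; apply: eq_bigr => i _; rewrite !mxE expr2.
  have e3 : nrm2sq (\row_i del i) = \sum_(i < N) del i ^+ 2.
    by rewrite /nrm2sq /dotv; apply: eq_bigr => i _; rewrite !mxE expr2.
  rewrite e1 e2 e3 in cs.
  rewrite dotv_mx hy QF QE WE.
  have := ler_wpM2l (sqr_ge0 (N%:R^-1 : R)) cs.
  set A := \sum_(i < N) _ * _.
  nra.
have S6 : lam * Q <= nrm2sq h.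
  have := @spec_ineq R _ _ _ gram_sym hlam y; rewrite -/G -/Q.
  suff -> : (y *m G *m G *m y^T) 0 0 = nrm2sq h by [].
  by rewrite /nrm2sq dotv_mx {2}hy trmx_mul gram_sym -/G hy !mulmxA.
set X := dotv h w in S2 S5.
set H := nrm2sq h in S6 *.
have L0 : 0 < L := Lpos.
have a1 : (4 * u * L) ^+ 2 <= Q * W.
  apply: le_trans S5; have h0 : 0 <= 4 * u * L by nra.
  nra.
have a2 : lam * Q * (mu * W) <= H * L.
  by apply: ler_pM => //; nra.
have a3 : lam * mu * (4 * u * L) ^+ 2 <= H * L.
  apply: le_trans a2; have lm : 0 <= lam * mu by nra.
  have := ler_wpM2l lm a1; move=> h0; apply: le_trans h0 _; rewrite le_eqVlt; apply/orP; left; apply/eqP; ring.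
have a4 : 16 * u ^+ 2 * mu * lam * L <= H.
  rewrite -(ler_pM2r L0); apply: le_trans a3; rewrite le_eqVlt; apply/orP; left; apply/eqP; ring.
rewrite nG -/H; lra.
Qed.
End Main.

Theorem lemma10 (R : realType) (d N : nat) (phi : 'I_N -> 'rV[R]_d)
  (thstar : 'rV[R]_d) (lam : R) :
  (exists i, phi i != 0) ->
  smallest_pos_eig (gram phi) lam ->
  let L := Lglm phi thstar in
  let v := umin phi thstar in
  let beta := 3 / 8 * maxphi2 phi in
  let L1 := fun th : 'rV[R]_d =>
    maxphi2 phi / (32 * (Num.min (umin phi th) v * Num.sqrt lam) `^ (3 / 2)) in
  let L0 := fun th : 'rV[R]_d =>
    17 * maxphi2 phi /
      (512 * umin phi th ^+ 2 * Num.min (umin phi th ^+ 2) (v ^+ 2) * lam) in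
  (forall th z : 'rV[R]_d, `|hessq L th z| <= beta * nrm2sq z) /\
  (forall th : 'rV[R]_d, 0 < L th ->
     forall z : 'rV[R]_d,
       `|hessq L th z| <=
         (L1 th * nrm2 (grad L th) + L0 th * nrm2 (grad L th) ^+ 2 / L th)
           * nrm2sq z).
Proof.
move=> [i0 _] hlam L v beta L1 L0.
have hN : (0 < N)%N by case: i0 => k hk; lia.
split; first by move=> th z; exact: (@partI R d N phi thstar hN th z).
move=> th Lpos z.
apply: le_trans (@partI R d N phi thstar hN th z) _.
apply: ler_wpM2r; first exact: nrm2sq_ge0.
have K := @key_ineq R d N phi thstar hN th lam hlam Lpos.
have M0 := @maxphi2_ge0 R d N phi hN.
set M := maxphi2 phi in M0 *.
set G2 := nrm2sq (grad (Lglm phi thstar) th) in K.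
have G20 : 0 <= G2 by exact: nrm2sq_ge0.
have e2 : nrm2 (grad L th) ^+ 2 = G2 by rewrite /nrm2 sqr_sqrtr.
rewrite e2.
have a0 : 0 <= L1 th * nrm2 (grad L th).
  apply: mulr_ge0; last exact: sqrtr_ge0.
  by rewrite /L1 divr_ge0 // mulr_ge0 // powR_ge0.
set u := umin phi th in K.
set mu := Num.min (u ^+ 2) (umin phi thstar ^+ 2) in K.
have u0 : 0 < u := @umin_gt0 R d N phi th.
have mu0 : 0 < mu by rewrite lt_min !exprn_gt0 // (@umin_gt0 R d N phi).
have lam0 : 0 < lam by case: hlam.
set Dn := 512 * u ^+ 2 * mu * lam.
have Dn0 : 0 < Dn by rewrite /Dn !mulr_gt0 // exprn_gt0.
have Lp : 0 < L th := Lpos.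
have b1 : 1 / 8 <= G2 / (Dn * L th).
  rewrite ler_pdivlMr; last exact: mulr_gt0.
  apply: le_trans K.
  by rewrite /Dn /L le_eqVlt; apply/orP; left; apply/eqP; field.
have b2 : L0 th * G2 / L th = 17 * M * (G2 / (Dn * L th)).
  rewrite /L0 /= -/u -/mu -/Dn -/M; field.
  by rewrite !gt_eqF.
rewrite b2.
have b3 : 17 * M * (1 / 8) <= 17 * M * (G2 / (Dn * L th)).
  by apply: ler_wpM2l => //; lra.
lra.
Qed.
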